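(* Let $\Gamma$ be a finitely generated infinite group, $\{\Gamma_n\}_{n\in\mathbb N}$ finite-index normal subgroups, $f\in\mathbb{R}\Gamma$ well-balanced and $g\in\mathbb{R}\Gamma$. There exists $C>0$ such that whenever $\pi_n(g)=h\,\pi_n(f)$ for some $n\in\mathbb{N}$ and $h\in\mathbb{R}(\Gamma/\Gamma_n)$, one has $$\max_{s\Gamma_n\in\Gamma/\Gamma_n}h_{s\Gamma_n}-\min_{s\Gamma_n\in\Gamma/\Gamma_n}h_{s\Gamma_n}\le C.$$
   Context: $f\in\mathbb{R}\Gamma$ is well-balanced if $\sum_sf_s=0$, $f_s\le0$ for $s\ne e$, $f_s=f_{s^{-1}}$, and the support of $f$ generates $\Gamma$. $\pi_n:\mathbb{R}\Gamma\to\mathbb{R}(\Gamma/\Gamma_n)$ is the ring homomorphism induced by the quotient map, $\pi_n(g)_{s\Gamma_n}=\sum_{t\in s\Gamma_n}g_t$; products in $\mathbb{R}(\Gamma/\Gamma_n)$ are convolutions over the finite group $\Gamma/\Gamma_n$. *)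

(* Defs.v *)
From Stdlib Require Import Reals List Classical ClassicalEpsilon.
Open Scope R_scope.

Record Group := {
  carrier :> Type;
  gmul : carrier -> carrier -> carrier;
  ginv : carrier -> carrier;
  gone : carrier;
  gmulA : forall x y z, gmul x (gmul y z) = gmul (gmul x y) z;
  gmul1l : forall x, gmul gone x = x;
  gmulVl : forall x, gmul (ginv x) x = gone }.
Arguments gmul {_} _ _.
Arguments ginv {_} _.
Arguments gone {_}.

Inductive gen {G : Group} (S : G -> Prop) : G -> Prop :=
| gen_one : gen S gone
| gen_base x : S x -> gen S x
| gen_mul x y : gen S x -> gen S y -> gen S (gmul x y)
| gen_inv x : gen S x -> gen S (ginv x).

Definition finitely_generated (G : Group) : Prop :=
  exists l : list G, forall x, gen (fun s => In s l) x.

Definition infinite_group (G : Group) : Prop :=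
  ~ exists l : list G, forall x : G, In x l.

Definition is_subgroup {G : Group} (H : G -> Prop) : Prop :=
  H gone /\ (forall x y, H x -> H y -> H (gmul x y)) /\ (forall x, H x -> H (ginv x)).

Definition is_normal {G : Group} (H : G -> Prop) : Prop :=
  forall g x, H x -> H (gmul (ginv g) (gmul x g)).

Definition finite_index {G : Group} (H : G -> Prop) : Prop :=
  exists l : list G, forall x, exists r, In r l /\ H (gmul (ginv r) x).

Definition is_transversal {G : Group} (H : G -> Prop) (l : list G) : Prop :=
  NoDup l /\ (forall x, exists r, In r l /\ H (gmul (ginv r) x)) /\
  (forall r1 r2, In r1 l -> In r2 l -> H (gmul (ginv r1) r2) -> r1 = r2).

Definition transversal {G : Group} (H : G -> Prop) : list G :=
  epsilon (inhabits nil) (is_transversal H).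

Definition lsum {A : Type} (l : list A) (F : A -> R) : R :=
  fold_right (fun a acc => F a + acc) 0 l.

(* Elements of RG: finitely supported functions G -> R. *)
Definition finsupp {G : Group} (f : G -> R) : Prop :=
  exists l : list G, forall x, f x <> 0 -> In x l.

Definition supp_list {G : Group} (f : G -> R) : list G :=
  epsilon (inhabits nil) (fun l => NoDup l /\ forall x, f x <> 0 -> In x l).

Definition total {G : Group} (f : G -> R) : R := lsum (supp_list f) f.

Definition well_balanced {G : Group} (f : G -> R) : Prop :=
  finsupp f /\ total f = 0 /\
  (forall s, s <> gone -> f s <= 0) /\
  (forall s, f s = f (ginv s)) /\
  (forall x, gen (fun s => f s <> 0) x).

(* Elements of R(G/H) are represented as functions G -> R constant on cosets. *)
Definition coset_invariant {G : Group} (H : G -> Prop) (h : G -> R) : Prop :=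
  forall x y, H (gmul (ginv x) y) -> h x = h y.

(* pi_H(g)_{sH} = sum_{t in sH} g_t *)
Definition proj {G : Group} (H : G -> Prop) (g : G -> R) : G -> R :=
  fun s => lsum (supp_list g)
    (fun t => if excluded_middle_informative (H (gmul (ginv s) t)) then g t else 0).

(* convolution in R(G/H): (a b)_{xH} = sum_{rH in G/H} a_{rH} b_{r^-1 x H} *)
Definition qconv {G : Group} (H : G -> Prop) (a b : G -> R) : G -> R :=
  fun x => lsum (transversal H) (fun r => a r * b (gmul (ginv r) x)).

(* Main.v *)
Require Import Defs.
From Stdlib Require Import Reals Lra List.
From mathcomp Require Import all_boot all_order all_algebra.
From mathcomp Require Import Rstruct.
From Stdlib Require Import ClassicalEpsilon.
Import Defs.
Import GRing.Theory.

Section LinAlg.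
Local Open Scope ring_scope.
Lemma linalg_ord (k : nat) (A : 'M[R]_k) : (0 < k)%N ->
  A *m (const_mx 1 : 'cV[R]_k) = 0 ->
  (forall v : 'rV[R]_k, v *m A = 0 -> forall i j, v 0 i = v 0 j) ->
  forall b : 'rV[R]_k, b *m (const_mx 1 : 'cV[R]_k) = 0 -> exists v, v *m A = b.
Proof.
move=> k0 HA Hker b Hb.
set one := (const_mx 1 : 'cV[R]_k).
have kerS : (kermx A <= (const_mx 1 : 'rV[R]_k))%MS.
  apply/row_subP => i.
  have := Hker (row i (kermx A)).
  rewrite -row_mul mulmx_ker row0 => /(_ erefl) Hc.
  have -> : row i (kermx A) = (row i (kermx A)) 0 (Ordinal k0) *: (const_mx 1 : 'rV[R]_k).
    apply/rowP => j; rewrite [RHS]mxE [X in _ * X]mxE mulr1; exact: (Hc j (Ordinal k0)).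
  exact: scalemx_sub.
have rk1 : (\rank (kermx A) <= 1)%N.
  apply: leq_trans (mxrankS kerS) _; exact: rank_leq_row.
rewrite mxrank_ker in rk1.
have AS : (A <= kermx one)%MS by apply/sub_kermxP.
have rkone : \rank one = 1%N.
  have nz : one^T != 0.
    apply/eqP => /rowP /(_ (Ordinal k0)); rewrite !mxE => /eqP; by rewrite oner_eq0.
  by rewrite -mxrank_tr rank_rV nz.
have rkS : \rank (kermx one) = (k - 1)%N by rewrite mxrank_ker rkone.
have SA : (kermx one <= A)%MS.
  have := mxrank_leqif_sup AS; rewrite rkS => H.
  have : (k - 1 <= \rank A)%N by rewrite leq_subLR addnC -leq_subLR.
  by move=> Hle; rewrite -(geq_leqif H).
have bS : (b <= kermx one)%MS by apply/sub_kermxP.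
have /submxP [D ->] := submx_trans bS SA.
by exists D.
Qed.

Lemma lsum_big {X} (x0 : X) (T : list X) (F : X -> R) :
  lsum T F = \sum_(i < size T) F (List.nth i T x0).
Proof.
elim: T => [|a T IH]; first by rewrite big_ord0.
by rewrite big_ord_recl /= IH.
Qed.

Lemma linalg_list {X} (T : list X) (x0 : X) (a : X -> X -> R) :
  NoDup T -> T <> nil ->
  (forall i, In i T -> lsum T (a i) = 0) ->
  (forall x : X -> R, (forall j, In j T -> lsum T (fun i => x i * a i j) = 0) ->
      forall i j, In i T -> In j T -> x i = x j) ->
  forall b : X -> R, lsum T b = 0 ->
  exists x : X -> R, forall j, In j T -> lsum T (fun i => x i * a i j) = b j.
Proof.
move=> HND HT Hrow Hker b Hb.
set k := size T.
have k0 : (0 < k)%N by rewrite /k; case: (T) HT.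
have Hnth : forall i j : 'I_k, List.nth i T x0 = List.nth j T x0 -> i = j.
  move=> i j /(proj1 (NoDup_nth T x0) HND i j); rewrite /k => H.
  apply/val_inj/H; apply/ltP; exact: ltn_ord.
have Hin : forall j, In j T -> exists i : 'I_k, List.nth i T x0 = j.
  move=> j /(In_nth T j x0) [n [/ltP Hn <-]]; by exists (Ordinal Hn).
pose A : 'M[R]_k := \matrix_(i, j) a (List.nth i T x0) (List.nth j T x0).
pose xof (v : 'rV[R]_k) (z : X) : R :=
  \sum_(i < k) (if ClassicalEpsilon.excluded_middle_informative (z = List.nth i T x0) then v 0 i else 0).
have xofE : forall v (j : 'I_k), xof v (List.nth j T x0) = v 0 j.
  move=> v j; rewrite /xof (bigD1 j) //= big1 ?addr0.
    by case: ClassicalEpsilon.excluded_middle_informative.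
  move=> i /negPf Hij; case: ClassicalEpsilon.excluded_middle_informative => // Heq.
  have E := Hnth _ _ Heq; by rewrite E eqxx in Hij.
have keyE : forall v (j : 'I_k), lsum T (fun i => xof v i * a i (List.nth j T x0)) = (v *m A) 0 j.
  move=> v j; rewrite (lsum_big x0) !mxE; apply: eq_bigr => i _.
  by rewrite xofE mxE.
have HA : A *m (const_mx 1 : 'cV[R]_k) = 0.
  apply/matrixP => i j; rewrite !mxE -[RHS](Hrow (List.nth i T x0)); last by apply: nth_In; apply/ltP.
  rewrite (lsum_big x0); apply: eq_bigr => l _; by rewrite !mxE mulr1.
have HK : forall v : 'rV[R]_k, v *m A = 0 -> forall i j, v 0 i = v 0 j.
  move=> v Hv i j; rewrite -!xofE; apply: Hker; try (apply: nth_In; apply/ltP; exact: ltn_ord).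
  move=> l /Hin [l' <-]; by rewrite keyE Hv mxE.
pose bv : 'rV[R]_k := \row_j b (List.nth j T x0).
have Hbv : bv *m (const_mx 1 : 'cV[R]_k) = 0.
  apply/matrixP => i j; rewrite !mxE -[RHS]Hb (lsum_big x0); apply: eq_bigr => l _; by rewrite !mxE mulr1.
have [v Hv] := @linalg_ord k A k0 HA HK bv Hbv.
exists (xof v) => j /Hin [j' <-]; by rewrite keyE Hv mxE.
Qed.

End LinAlg.

Open Scope R_scope.

Lemma gmulA' (G : Group) (x y z : G) : gmul (gmul x y) z = gmul x (gmul y z).
Proof. by rewrite gmulA. Qed.
Lemma gmulV (G : Group) (x : G) : gmul x (ginv x) = gone.
Proof.
transitivity (gmul (gmul (ginv (ginv x)) (ginv x)) (gmul x (ginv x))).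
  by rewrite gmulVl gmul1l.
by rewrite -gmulA (gmulA _ (ginv x) x (ginv x)) gmulVl gmul1l gmulVl.
Qed.
Lemma gmulr1 (G : Group) (x : G) : gmul x gone = x.
Proof. by rewrite -(gmulVl _ x) gmulA gmulV gmul1l. Qed.
Lemma gmulKV (G : Group) (x y : G) : gmul (ginv x) (gmul x y) = y.
Proof. by rewrite gmulA gmulVl gmul1l. Qed.
Lemma gmulVK (G : Group) (x y : G) : gmul x (gmul (ginv x) y) = y.
Proof. by rewrite gmulA gmulV gmul1l. Qed.
Lemma ginv_uniq (G : Group) (x y : G) : gmul x y = gone -> ginv x = y.
Proof. move=> H; by rewrite -(gmulr1 _ (ginv x)) -H gmulKV. Qed.
Lemma ginvK (G : Group) (x : G) : ginv (ginv x) = x.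
Proof. apply: ginv_uniq; exact: gmulVl. Qed.
Lemma ginvM (G : Group) (x y : G) : ginv (gmul x y) = gmul (ginv y) (ginv x).
Proof. apply: ginv_uniq; by rewrite gmulA' gmulVK gmulV. Qed.
Lemma ginv1 (G : Group) : ginv (@gone G) = gone.
Proof. apply: ginv_uniq; exact: gmul1l. Qed.

Ltac gsimpl := rewrite ?ginvM ?ginvK ?ginv1 ?gmulA' ?gmul1l ?gmulr1 ?gmulVl ?gmulV ?gmulKV ?gmulVK;
  rewrite ?ginvM ?ginvK ?ginv1 ?gmulA' ?gmul1l ?gmulr1 ?gmulVl ?gmulV ?gmulKV ?gmulVK.

Arguments lsum {A} l F : simpl never.
Lemma lsum_nil {A} (F : A -> R) : lsum nil F = 0. Proof. by []. Qed.
Lemma lsum_cons {A} a l (F : A -> R) : lsum (a :: l) F = F a + lsum l F. Proof. by []. Qed.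
Lemma lsum_app {A} l1 l2 (F : A -> R) : lsum (l1 ++ l2) F = lsum l1 F + lsum l2 F.
Proof. elim: l1 => [|a l IH] /=; rewrite ?lsum_nil ?lsum_cons ?IH; lra. Qed.
Lemma lsum_ext {A} l (F H : A -> R) : (forall a, In a l -> F a = H a) -> lsum l F = lsum l H.
Proof.
elim: l => [|a l IH] Hx //. rewrite !lsum_cons Hx; last by left.
by rewrite IH // => b Hb; apply Hx; right.
Qed.
Lemma lsum_plus {A} l (F H : A -> R) : lsum l (fun a => F a + H a) = lsum l F + lsum l H.
Proof. elim: l => [|a l IH] /=; rewrite ?lsum_nil ?lsum_cons ?IH; lra. Qed.
Lemma lsum_scal {A} l c (F : A -> R) : lsum l (fun a => c * F a) = c * lsum l F.
Proof. elim: l => [|a l IH] /=; rewrite ?lsum_nil ?lsum_cons ?IH; lra. Qed.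
Lemma lsum_scalr {A} l c (F : A -> R) : lsum l (fun a => F a * c) = lsum l F * c.
Proof. elim: l => [|a l IH] /=; rewrite ?lsum_nil ?lsum_cons ?IH; lra. Qed.
Lemma lsum_minus {A} l (F H : A -> R) : lsum l (fun a => F a - H a) = lsum l F - lsum l H.
Proof. elim: l => [|a l IH] /=; rewrite ?lsum_nil ?lsum_cons ?IH; lra. Qed.
Lemma lsum_zero {A} l (F : A -> R) : (forall a, In a l -> F a = 0) -> lsum l F = 0.
Proof.
move=> H; rewrite (lsum_ext l F (fun _ => 0)) //. elim: l {H} => // a l; rewrite lsum_cons => ->; lra.
Qed.
Lemma lsum_swap {A B} (l1 : list A) (l2 : list B) (F : A -> B -> R) :
  lsum l1 (fun a => lsum l2 (F a)) = lsum l2 (fun b => lsum l1 (fun a => F a b)).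
Proof.
elim: l1 => [|a l IH]; first by rewrite lsum_nil; symmetry; apply lsum_zero => b _; exact: lsum_nil.
rewrite lsum_cons IH -lsum_plus; apply lsum_ext => b _; by rewrite lsum_cons.
Qed.
Lemma lsum_le_mem {A} l (F : A -> R) a : In a l -> (forall b, In b l -> F b <= 0) -> lsum l F <= F a.
Proof.
elim: l => [|b l IH] //= Ha Hb; rewrite lsum_cons.
have Hl : lsum l F <= 0.
  clear IH Ha; elim: l Hb => [|c l IH'] Hb; rewrite ?lsum_nil ?lsum_cons; first lra.
  have := Hb c (or_intror (or_introl erefl)).
  have := IH' (fun d Hd => Hb d (match Hd with or_introl e => or_introl e | or_intror h => or_intror (or_intror h) end)). lra.
case: Ha => [<-|Ha]. lra.
have := IH Ha (fun d Hd => Hb d (or_intror Hd)). have := Hb b (or_introl erefl). lra.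
Qed.
Lemma lsum_max {A} {l : list A} (u : A -> R) : l <> nil -> exists m, In m l /\ forall r, In r l -> u r <= u m.
Proof.
elim: l => [|a l IH] // _. case: l IH => [|b l] IH.
  exists a; split; [by left| move=> r [<-|[]]; lra].
have [m [Hm Hmax]] := IH ltac:(discriminate).
case: (Rle_dec (u a) (u m)) => H.
  exists m; split; first by right. move=> r [<-|Hr] //. exact: Hmax.
exists a; split; first by left. move=> r [<-|Hr]; first lra. have := Hmax r Hr; lra.
Qed.

Section Quot.
Variable G : Group.
Variable N : G -> Prop.
Hypothesis HNs : is_subgroup N.
Hypothesis HNn : is_normal N.
Hypothesis HNf : finite_index N.

Local Notation E a b := (N (gmul (ginv a) b)).
Local Notation dec := excluded_middle_informative.
Local Notation "'IF' P 'THEN' a 'ELSE' b" :=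
  (match excluded_middle_informative P with left _ => a | right _ => b end) (at level 200, right associativity).

Lemma N1 : N gone. Proof. by case: HNs. Qed.
Lemma Nmul {x y} : N x -> N y -> N (gmul x y). Proof. case: HNs => _ [H _]; exact: H. Qed.
Lemma Ninv {x} : N x -> N (ginv x). Proof. case: HNs => _ [_ H]; exact: H. Qed.
Lemma Nconj g {x} : N x -> N (gmul g (gmul x (ginv g))).
Proof. move=> /(HNn (ginv g)); by rewrite ginvK. Qed.

Lemma E_refl a : E a a. Proof. rewrite gmulVl; exact: N1. Qed.
Lemma E_sym {a b} : E a b -> E b a.
Proof. by move=> /Ninv; rewrite ginvM ginvK. Qed.
Lemma E_trans {a b c} : E a b -> E b c -> E a c.
Proof. move=> H1 H2; have := Nmul H1 H2; by gsimpl. Qed.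
Lemma E_lmul x a b : E (gmul x a) (gmul x b) <-> E a b.
Proof. by gsimpl. Qed.
Lemma E_rmul {a b} y : E a b -> E (gmul a y) (gmul b y).
Proof. move=> /(HNn y); by gsimpl. Qed.

Lemma ifE {P Q : Prop} (a b : R) : (P <-> Q) ->
  (IF P THEN a ELSE b) = (IF Q THEN a ELSE b).
Proof. move=> H; case: (dec P) => HP; case: (dec Q) => HQ //; exfalso; tauto. Qed.

Fixpoint cdedup (l : list G) : list G :=
  match l with
  | nil => nil
  | r :: l' => IF (exists r', In r' l' /\ E r r') THEN cdedup l' ELSE r :: cdedup l'
  end.

Lemma cdedup_sub {l r} : In r (cdedup l) -> In r l.
Proof.
elim: l => [|a l IH] //=; case: dec => Hd H; first by right; apply IH.
case: H => [->|H]; [by left | by right; apply IH].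
Qed.
Lemma cdedup_cov {l r} : In r l -> exists r', In r' (cdedup l) /\ E r r'.
Proof.
elim: l r => [|a l IH] r //= [<-|H]; case: dec => Hd.
- case: Hd => r' [Hr' He]; have [r'' [H1 H2]] := IH _ Hr'. exists r''; split => //; exact: E_trans He H2.
- exists a; split; [by left | exact: E_refl].
- exact: IH _ H.
- have [r' [H1 H2]] := IH _ H; exists r'; split => //; by right.
Qed.
Lemma cdedup_uniq l r1 r2 : In r1 (cdedup l) -> In r2 (cdedup l) -> E r1 r2 -> r1 = r2.
Proof.
elim: l => [|a l IH] //=; case: dec => Hd; first exact: IH.
move=> [<-|H1] [<-|H2] He //.
- exfalso; apply: Hd; exists r2; split => //; exact: cdedup_sub.
- exfalso; apply: Hd; exists r1; split; [exact: cdedup_sub | exact: E_sym].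
- exact: IH.
Qed.
Lemma cdedup_nodup l : NoDup (cdedup l).
Proof.
elim: l => [|a l IH] /=; first by constructor.
case: dec => Hd //; constructor => // H; apply: Hd; exists a; split; [exact: cdedup_sub | exact: E_refl].
Qed.

Lemma T_spec : is_transversal N (transversal N).
Proof.
rewrite /transversal; apply: epsilon_spec.
case: HNf => l Hl; exists (cdedup l); split; [exact: cdedup_nodup | split].
- move=> x; have [r [Hr He]] := Hl x; have [r' [H1 H2]] := cdedup_cov Hr.
  exists r'; split => //; exact: E_trans (E_sym H2) He.
- exact: cdedup_uniq.
Qed.

Local Notation T := (transversal N).

Lemma T_nodup : NoDup T. Proof. by case: T_spec. Qed.
Lemma T_cover x : exists r, In r T /\ E r x. Proof. case: T_spec => _ [H _]; exact: H. Qed.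
Lemma T_uniq {r1 r2} : In r1 T -> In r2 T -> E r1 r2 -> r1 = r2. Proof. case: T_spec => _ [_ H]; exact: H. Qed.
Lemma T_nil : T <> nil. Proof. by have [r [Hr _]] := T_cover gone; case: (T) Hr. Qed.

Lemma sum_hit_gen (psi : G -> R) {c r0} : In r0 T -> E r0 c ->
  lsum T (fun r => IF (E r c) THEN psi r ELSE 0) = psi r0.
Proof.
move=> Hr0 Hc; have [l1 [l2 Hs]] := in_split _ _ Hr0.
have ND := T_nodup; rewrite Hs in ND.
have Hn := NoDup_remove_2 _ _ _ ND.
have Hoth : forall r, In r (l1 ++ l2) -> ~ E r c.
  move=> r Hr He; apply: Hn.
  have Er : r = r0.
    apply: T_uniq; [rewrite Hs; apply in_or_app; case: (in_app_or _ _ _ Hr) => HH; [left|right; right] => //|done|].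
    exact: E_trans He (E_sym Hc).
  by rewrite -Er.
rewrite Hs lsum_app lsum_cons !lsum_zero.
- case: dec => H0 /=; [lra | exfalso; exact: H0 Hc].
- move=> r Hr; case: dec => // He; exfalso; apply: (Hoth r) => //; apply in_or_app; by right.
- move=> r Hr; case: dec => // He; exfalso; apply: (Hoth r) => //; apply in_or_app; by left.
Qed.

Lemma sum_hit (psi : G -> R) c : coset_invariant N psi ->
  lsum T (fun r => IF (E r c) THEN psi r ELSE 0) = psi c.
Proof.
move=> Hpsi; have [r0 [H1 H2]] := T_cover c; rewrite (sum_hit_gen _ H1 H2); exact: Hpsi.
Qed.

Lemma sum_hit1 (v : R) c : lsum T (fun r => IF (E r c) THEN v ELSE 0) = v.
Proof. by apply: (sum_hit (fun _ => v)). Qed.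

Lemma transl (phi : G -> R) (y : G) : coset_invariant N phi ->
  lsum T (fun r => phi (gmul y r)) = lsum T phi.
Proof.
move=> Hphi.
rewrite (lsum_ext T (fun r => phi (gmul y r))
  (fun r => lsum T (fun r' => IF (E r' (gmul y r)) THEN phi r' ELSE 0))); last first.
  move=> r _; by rewrite sum_hit.
rewrite -lsum_swap; apply: lsum_ext => r' _.
rewrite (lsum_ext T _ (fun r => IF (E r (gmul (ginv y) r')) THEN phi r' ELSE 0)).
  exact: sum_hit1.
move=> r _ /=; apply: ifE; split => H.
- have := Ninv H; by gsimpl.
- have := Ninv H; by gsimpl.
Qed.


Lemma supp_spec (g : G -> R) : finsupp g ->
  NoDup (supp_list g) /\ forall x, g x <> 0 -> In x (supp_list g).
Proof.
move=> [l Hl]; rewrite /supp_list.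
apply: (epsilon_spec (inhabits nil) (fun l => NoDup l /\ forall x, g x <> 0 -> In x l)).
pose d := fun x y : G => dec (x = y).
exists (nodup d l); split; first exact: NoDup_nodup.
move=> x Hx; apply/nodup_In; exact: Hl.
Qed.

Lemma lsum_nonpos {A} (l : list A) (F : A -> R) : (forall b, In b l -> F b <= 0) -> lsum l F <= 0.
Proof.
elim: l => [|a l IH] H; rewrite ?lsum_nil ?lsum_cons; first lra.
have := H a (or_introl erefl); have := IH (fun b Hb => H b (or_intror Hb)); lra.
Qed.

Variable f : G -> R.
Hypothesis Hf : well_balanced f.
Local Notation F := (proj N f).
Local Notation SL := (supp_list f).

Lemma Hf_supp : NoDup SL /\ forall x, f x <> 0 -> In x SL.
Proof. apply: supp_spec; by case: Hf. Qed.
Lemma Hf_tot : lsum SL f = 0. Proof. by case: Hf => _ []. Qed.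
Lemma Hf_neg t : t <> gone -> f t <= 0. Proof. by case: Hf => _ [_ [H _]]; apply: H. Qed.
Lemma Hf_sym t : f t = f (ginv t). Proof. by case: Hf => _ [_ [_ [H _]]]; apply: H. Qed.
Lemma Hf_gen x : gen (fun s => f s <> 0) x. Proof. by case: Hf => _ [_ [_ [_ H]]]; apply: H. Qed.

Lemma F_ci : coset_invariant N F.
Proof.
move=> x y Hxy; rewrite /proj; apply: lsum_ext => t _ /=; apply: ifE; split => H.
- exact: E_trans (E_sym Hxy) H.
- exact: E_trans Hxy H.
Qed.

Lemma F_shift (y : G) : lsum T (fun r => F (gmul y r)) = 0.
Proof.
rewrite /proj lsum_swap; transitivity (lsum SL f); last exact: Hf_tot.
apply: lsum_ext => t _.
rewrite (lsum_ext T _ (fun r => IF (E r (gmul (ginv y) t)) THEN f t ELSE 0)).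
  exact: sum_hit1.
move=> r _ /=; apply: ifE; by gsimpl.
Qed.

Lemma sumF (x : G) : lsum T (fun r => F (gmul (ginv r) x)) = 0.
Proof.
rewrite /proj lsum_swap; transitivity (lsum SL f); last exact: Hf_tot.
apply: lsum_ext => t _.
rewrite (lsum_ext T _ (fun r => IF (E r (gmul x (ginv t))) THEN f t ELSE 0)).
  exact: sum_hit1.
move=> r _ /=; apply: ifE; split => H.
- have := Ninv (Nconj t H); by gsimpl.
- have := Nconj (ginv t) (Ninv H); by gsimpl.
Qed.

Lemma Finv_ci {r r'} w : E r r' -> F (gmul (ginv r) w) = F (gmul (ginv r') w).
Proof.
move=> H; apply: F_ci; have := Nconj (ginv w) (Nconj r (Ninv H)); by gsimpl.
Qed.

Local Notation Lq u z := (qconv N u F z).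

Lemma Lq_ciz u {z z'} : E z z' -> Lq u z = Lq u z'.
Proof.
move=> H; rewrite /qconv; apply: lsum_ext => r _; congr (_ * _); apply: F_ci.
by apply/E_lmul.
Qed.
Lemma Lq_plus u v z : Lq (fun w => u w + v w) z = Lq u z + Lq v z.
Proof. rewrite /qconv -lsum_plus; apply: lsum_ext => r _; ring. Qed.
Lemma Lq_scal c u z : Lq (fun w => c * u w) z = c * Lq u z.
Proof. rewrite /qconv -lsum_scal; apply: lsum_ext => r _; ring. Qed.
Lemma Lq_const c z : Lq (fun _ => c) z = 0.
Proof. by rewrite /qconv lsum_scal sumF Rmult_0_r. Qed.
Lemma Lq_ext u v z : (forall w, u w = v w) -> Lq u z = Lq v z.
Proof. move=> H; rewrite /qconv; apply: lsum_ext => r _; by rewrite H. Qed.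
Lemma Lq_transl u y z : coset_invariant N u -> Lq (fun w => u (gmul y w)) z = Lq u (gmul y z).
Proof.
move=> Hu; rewrite /qconv.
rewrite -(transl (fun r => u r * F (gmul (ginv r) (gmul y z))) y).
  apply: lsum_ext => r _; by gsimpl.
move=> r r' H; rewrite (Hu _ _ H) (Finv_ci _ H) //.
Qed.

Lemma F_nonpos {y} : ~ N y -> F y <= 0.
Proof.
move=> Hy; rewrite /proj; apply: lsum_nonpos => t _; case: dec => H /=; last lra.
apply: Hf_neg => Ht; apply: Hy; move: H; rewrite Ht gmulr1 => /Ninv; by rewrite ginvK.
Qed.

Lemma F_le {y t} : ~ N y -> f t <> 0 -> E y t -> F y <= f t.
Proof.
move=> Hy Ht Hyt; rewrite /proj.
have -> : f t = (IF (E y t) THEN f t ELSE 0) by case: dec.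
apply: lsum_le_mem; first by apply Hf_supp.
move=> b _; case: dec => H /=; last lra.
apply: Hf_neg => Ht'; apply: Hy; move: H; rewrite Ht' gmulr1 => /Ninv; by rewrite ginvK.
Qed.

Section Key.
Variable u : G -> R.
Hypothesis Hu : coset_invariant N u.
Variable x0 : G.
Hypothesis Hmax : forall z, u z <= u x0.

Lemma key_eq x : lsum T (fun r => (u x0 - u r) * F (gmul (ginv r) x)) = - Lq u x.
Proof.
rewrite /qconv (lsum_ext T _ (fun r => u x0 * F (gmul (ginv r) x) - u r * F (gmul (ginv r) x))).
  by rewrite lsum_minus lsum_scal sumF; ring.
move=> r _; ring.
Qed.

Lemma key_term {x} r : u x = u x0 -> (u x0 - u r) * F (gmul (ginv r) x) <= 0.
Proof.
move=> Hx; case: (classic (E r x)) => H.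
- rewrite (Hu _ _ H) Hx; lra.
- have := F_nonpos H; have := Hmax r; nra.
Qed.

Lemma key_le {x r0} : u x = u x0 -> In r0 T ->
  - Lq u x <= (u x0 - u r0) * F (gmul (ginv r0) x).
Proof.
move=> Hx Hr0; rewrite -key_eq; apply: lsum_le_mem => // r _; exact: key_term.
Qed.

Lemma closure x t : u x = u x0 -> Lq u x <= 0 -> f t <> 0 -> u (gmul x t) = u x0.
Proof.
move=> Hx HL Ht.
have [r0 [Hr0 Hrt]] := T_cover (gmul x t).
rewrite -(Hu _ _ Hrt).
case: (classic (E r0 x)) => Hrx; first by rewrite (Hu _ _ Hrx).
have Hl := key_le Hx Hr0.
have Hy : E (gmul (ginv r0) x) (ginv t).
  have := Nconj t (Ninv Hrt); by gsimpl.
have Ht' : f (ginv t) <> 0 by rewrite -Hf_sym.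
have Hle := F_le Hrx Ht' Hy.
have Hneg : f (ginv t) < 0.
  have : f (ginv t) <= 0.
    apply: Hf_neg => E1; apply: Hrx; move: Hy; rewrite E1 gmulr1 => /Ninv; by rewrite ginvK.
  lra.
have := Hmax r0; nra.
Qed.
End Key.

Lemma gen_closed (P : G -> Prop) : (forall x t, P x -> f t <> 0 -> P (gmul x t)) ->
  forall z, gen (fun s => f s <> 0) z -> forall x, P x -> P (gmul x z) /\ P (gmul x (ginv z)).
Proof.
move=> HP z; elim => {z}.
- move=> x Hx; by rewrite ginv1 gmulr1.
- move=> s Hs x Hx; split; first exact: HP. apply: HP => //; by rewrite -Hf_sym.
- move=> a b _ IHa _ IHb x Hx; split.
  + rewrite gmulA; apply (proj1 (IHb _ (proj1 (IHa _ Hx)))).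
  + rewrite ginvM gmulA; apply (proj2 (IHa _ (proj2 (IHb _ Hx)))).
- move=> a _ IH x Hx; rewrite ginvK; split; [exact: (proj2 (IH _ Hx)) | exact: (proj1 (IH _ Hx))].
Qed.

Lemma glob_max {u : G -> R} : coset_invariant N u -> exists x0, forall z, u z <= u x0.
Proof.
move=> Hu; have [m [Hm Hmax]] := lsum_max u T_nil.
exists m => z; have [r [Hr Hrz]] := T_cover z; rewrite -(Hu _ _ Hrz); exact: Hmax.
Qed.

Lemma maxprin (u : G -> R) (a : G) : coset_invariant N u ->
  (forall z, ~ E z a -> Lq u z <= 0) -> forall z, u z <= u a.
Proof.
move=> Hu Ha; have [x0 Hmax] := glob_max Hu.
case: (Rle_dec (u x0) (u a)) => Hx0.
  move=> z; have := Hmax z; lra.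
exfalso.
have Hc : forall x t, u x = u x0 -> f t <> 0 -> u (gmul x t) = u x0.
  move=> x t Hx Ht; apply: (@closure u Hu x0 Hmax x t Hx _ Ht); apply: Ha => Hxa.
  rewrite (Hu _ _ Hxa) in Hx; lra.
have := proj1 (gen_closed (fun x => u x = u x0) Hc _ (Hf_gen (gmul (ginv x0) a)) x0 erefl).
rewrite gmulVK; lra.
Qed.

Lemma kernel (u : G -> R) : coset_invariant N u -> (forall z, Lq u z = 0) -> forall z w, u z = u w.
Proof.
move=> Hu H z w; apply: Rle_antisym; apply: maxprin => // y _; rewrite H; lra.
Qed.

Definition lift (x : G -> R) (z : G) : R := lsum T (fun r => IF (E r z) THEN x r ELSE 0).
Lemma lift_ci x : coset_invariant N (lift x).
Proof.
move=> z z' H; rewrite /lift; apply: lsum_ext => r _ /=; apply: ifE; split => H'.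
- exact: E_trans H' H.
- exact: E_trans H' (E_sym H).
Qed.
Lemma lift_T x {c} : In c T -> lift x c = x c.
Proof. move=> Hc; rewrite /lift (sum_hit_gen x Hc) //; exact: E_refl. Qed.
Lemma Lq_lift x {j} : In j T -> Lq (lift x) j = lsum T (fun i => x i * F (gmul (ginv i) j)).
Proof. move=> Hj; rewrite /qconv; apply: lsum_ext => r Hr; by rewrite lift_T. Qed.

Definition ind (a z : G) : R := IF (E z a) THEN 1 ELSE 0.
Lemma ind_ci a : coset_invariant N (ind a).
Proof.
move=> z z' H; rewrite /ind; apply: ifE; split => H'.
- exact: E_trans (E_sym H) H'.
- exact: E_trans H H'.
Qed.
Lemma sum_ind a : lsum T (ind a) = 1.
Proof. exact: sum_hit1. Qed.

Lemma solve (b : G -> R) : coset_invariant N b -> lsum T b = 0 ->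
  exists u, coset_invariant N u /\ forall z, Lq u z = b z.
Proof.
move=> Hbci Hb.
have Hker : forall x : G -> R, (forall j, In j T -> lsum T (fun i => x i * F (gmul (ginv i) j)) = 0) ->
    forall i j, In i T -> In j T -> x i = x j.
  move=> x Hx i j Hi Hj; rewrite -(lift_T x Hi) -(lift_T x Hj).
  apply: kernel; first exact: lift_ci.
  move=> z; have [k [Hk Hkz]] := T_cover z.
  by rewrite -(Lq_ciz _ Hkz) Lq_lift // Hx.
have [x Hx] := @linalg_list G T gone (fun i j => F (gmul (ginv i) j)) T_nodup T_nil
  (fun i _ => F_shift (ginv i)) Hker b Hb.
exists (lift x); split; first exact: lift_ci.
move=> z; have [j [Hj Hjz]] := T_cover z.
by rewrite -(Lq_ciz _ Hjz) -(Hbci _ _ Hjz) Lq_lift // Hx.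
Qed.

Definition Pn (t : G) (K : R) : Prop :=
  exists u, coset_invariant N u /\ (forall z, Lq u z = ind t z - ind gone z) /\
    forall z w, u z - u w <= K.

Lemma P_one : Pn gone 0.
Proof.
exists (fun _ => 0); split; first by []. split.
- move=> z; rewrite Lq_const; ring.
- move=> z w; lra.
Qed.

Lemma dipole {s} : f s <> 0 -> ~ N s -> Pn s (- / f s).
Proof.
move=> Hs HNs'.
have Hsg : ~ E s gone.
  move=> H; apply: HNs'; move: H; rewrite gmulr1 => /Ninv; by rewrite ginvK.
have [u [Hu HL]] := solve (fun z => ind s z - ind gone z)
  (fun z z' H => ltac:(cbv beta; rewrite (ind_ci s _ _ H) (ind_ci gone _ _ H); reflexivity)) ltac:(rewrite lsum_minus !sum_ind; ring).
exists u; split => //; split => //.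
have Hmax : forall z, u z <= u s.
  apply: maxprin => // z Hz; rewrite HL /ind; case: dec => // _; case: dec => _ /=; lra.
have Hmin : forall z, u gone <= u z.
  move=> z; suff : - u z <= - u gone by lra.
  apply: (maxprin (fun z => - u z)); first by move=> a b H; rewrite (Hu _ _ H).
  move=> y Hy; rewrite (Lq_ext _ (fun w => -1 * u w)); last by move=> w; ring.
  rewrite Lq_scal HL /ind; case: dec => _; case: dec => // _ /=; lra.
have [r0 [Hr0 Hr0g]] := T_cover gone.
have Hl := @key_le u Hu s Hmax s r0 erefl Hr0.
rewrite HL /ind in Hl.
move: Hl; case: dec => [_|Hn]; last by exfalso; apply: Hn; exact: E_refl.
case: dec => [Hc|_] /= Hl; first by exfalso; exact: Hsg Hc.
have Hr0N : N r0 by move: Hr0g; rewrite gmulr1 => /Ninv; rewrite ginvK.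
have Hy : ~ N (gmul (ginv r0) s).
  move=> H; apply: HNs'; have := Nmul Hr0N H; by gsimpl.
have Hys : E (gmul (ginv r0) s) s.
  have := Nconj (ginv s) Hr0N; by gsimpl.
have Hle := F_le Hy Hs Hys.
have Hfs : f s < 0.
  have : f s <= 0 by apply: Hf_neg => E1; apply: HNs'; rewrite E1; exact: N1.
  lra.
have Hug : u r0 = u gone by apply: Hu; exact: Hr0g.
rewrite Hug in Hl.
have Hd : 0 <= u s - u gone by have := Hmin s; lra.
have H2 : -1 <= (u s - u gone) * f s by nra.
move=> z w; have := Hmax z; have := Hmin w => H3 H4.
have : u s - u gone <= - / f s.
  apply: (Rmult_le_reg_r (- f s)); first lra.
  have -> : - / f s * - f s = 1 by field; lra.
  nra.
lra.
Qed.

Lemma P_base s : f s <> 0 -> Pn s (Rabs (/ f s)).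
Proof.
move=> Hs; case: (classic (N s)) => HN.
- exists (fun _ => 0); split; first by []. split.
  + move=> z; rewrite Lq_const /ind; symmetry; apply: Rminus_diag_eq; apply: ifE.
    have Hg : E s gone by have := Ninv HN; by gsimpl.
    split => H; [exact: E_trans H Hg | exact: E_trans H (E_sym Hg)].
  + move=> z w; have := Rabs_pos (/ f s); lra.
- have [u [H1 [H2 H3]]] := dipole Hs HN; exists u; split => //; split => //.
  move=> z w; have := H3 z w; have := Rle_abs (- / f s); rewrite Rabs_Ropp; lra.
Qed.

Lemma P_mul x y K1 K2 : Pn x K1 -> Pn y K2 -> Pn (gmul x y) (K1 + K2).
Proof.
move=> [u1 [Hu1 [HL1 Ho1]]] [u2 [Hu2 [HL2 Ho2]]].
exists (fun z => u1 z + u2 (gmul (ginv x) z)); split; [|split].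
- move=> z z' H; rewrite (Hu1 _ _ H) (Hu2 (gmul (ginv x) z) (gmul (ginv x) z')) //; by apply/E_lmul.
- move=> z; rewrite Lq_plus Lq_transl // HL1 HL2 /ind.
  rewrite (ifE _ _ (_ : E (gmul (ginv x) z) y <-> E z (gmul x y))); last by gsimpl.
  rewrite (ifE _ _ (_ : E (gmul (ginv x) z) gone <-> E z x)); last by gsimpl.
  ring.
- move=> z w; have := Ho1 z w; have := Ho2 (gmul (ginv x) z) (gmul (ginv x) w); lra.
Qed.

Lemma P_inv x K : Pn x K -> Pn (ginv x) K.
Proof.
move=> [u [Hu [HL Ho]]].
exists (fun z => - u (gmul x z)); split; [|split].
- move=> z z' H; rewrite (Hu (gmul x z) (gmul x z')) //; by apply/E_lmul.
- move=> z; rewrite (Lq_ext _ (fun w => -1 * u (gmul x w))); last by move=> w; ring.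
  rewrite Lq_scal Lq_transl // HL /ind.
  rewrite (ifE _ _ (_ : E (gmul x z) x <-> E z gone)); last by gsimpl.
  rewrite (ifE _ _ (_ : E (gmul x z) gone <-> E z (ginv x))); last by gsimpl.
  ring.
- move=> z w; have := Ho (gmul x w) (gmul x z); lra.
Qed.

End Quot.

Lemma scal_osc (c a K : R) : a <= K -> - a <= K -> c * a <= Rabs c * K.
Proof. move=> H1 H2; case: (Rle_dec 0 c) => Hc. rewrite Rabs_right; [nra|lra]. rewrite Rabs_left; nra. Qed.

Theorem lemma5p4 (G : Group) (N : nat -> G -> Prop)
  (Hfg : finitely_generated G) (Hinf : infinite_group G)
  (HN : forall n, is_subgroup (N n) /\ is_normal (N n) /\ finite_index (N n))
  (f g : G -> R) (Hf : well_balanced f) (Hg : finsupp g) :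
  exists C : R, 0 < C /\
    forall (n : nat) (h : G -> R), coset_invariant (N n) h ->
      (forall x : G, proj (N n) g x = qconv (N n) h (proj (N n) f) x) ->
      forall x y : G, h x - h y <= C.
Proof.
have HP : forall t, exists K, 0 <= K /\ forall n, Pn G (N n) f t K.
  move=> t; have Hgen : gen (fun s => f s <> 0) t by case: Hf => _ [_ [_ [_ H]]]; apply: H.
  elim: Hgen => {t}.
  - exists 0; split; first lra. move=> n; case: (HN n) => [H1 [H2 H3]]; exact: P_one.
  - move=> s Hs; exists (Rabs (/ f s)); split; first exact: Rabs_pos.
    move=> n; case: (HN n) => [H1 [H2 H3]]; exact: P_base.
  - move=> x y _ [K1 [HK1 H1]] _ [K2 [HK2 H2]]; exists (K1 + K2); split; first lra.
    move=> n; case: (HN n) => [Ha [Hb Hc]]; exact: P_mul.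
  - move=> x _ [K [HK H]]; exists K; split => // n; case: (HN n) => [Ha [Hb Hc]]; exact: P_inv.
have HS : forall l : list G, exists C, 0 <= C /\ forall n, exists u, coset_invariant (N n) u /\
    (forall z, qconv (N n) u (proj (N n) f) z =
       lsum l (fun t => g t * (ind G (N n) t z - ind G (N n) gone z))) /\
    forall z w, u z - u w <= C.
  elim => [|t l [C [HC IH]]].
  - exists 0; split; first lra. move=> n; case: (HN n) => [H1 [H2 H3]].
    exists (fun _ => 0); split; first by []. split.
    + move=> z; rewrite lsum_nil; exact: Lq_const.
    + move=> z w; lra.
  - have [K [HK HPt]] := HP t.
    exists (Rabs (g t) * K + C); split; first by have := Rabs_pos (g t); nra.
    move=> n; case: (HN n) => [H1 [H2 H3]].
    have [u1 [Hu1 [HL1 Ho1]]] := HPt n.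
    have [u2 [Hu2 [HL2 Ho2]]] := IH n.
    exists (fun z => g t * u1 z + u2 z); split; [|split].
    + move=> z z' H; by rewrite (Hu1 _ _ H) (Hu2 _ _ H).
    + move=> z; rewrite lsum_cons Lq_plus Lq_scal HL1 HL2 //.
    + move=> z w; have := Ho2 z w; have := scal_osc (g t) _ _ (Ho1 z w) ltac:(have := Ho1 w z; lra); lra.
have [C [HC0 HC]] := HS (supp_list g).
exists (C + 1); split; first lra.
move=> n h Hh Heq x y.
case: (HN n) => [H1 [H2 H3]].
have [u [Hu [HLu Hou]]] := HC n.
set tg := lsum (supp_list g) g.
have Hv : forall z, qconv (N n) (fun w => h w + -1 * u w) (proj (N n) f) z = tg * ind G (N n) gone z.
  move=> z; rewrite Lq_plus Lq_scal HLu -Heq /proj.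
  rewrite (lsum_ext _ (fun t => g t * (ind G (N n) t z - ind G (N n) gone z))
    (fun t => g t * ind G (N n) t z - g t * ind G (N n) gone z)); last by move=> t _; ring.
  rewrite lsum_minus lsum_scalr.
  have -> : lsum (supp_list g) (fun t => g t * ind G (N n) t z) =
    lsum (supp_list g) (fun t => match excluded_middle_informative (N n (gmul (ginv z) t)) with
                                 | left _ => g t | right _ => 0 end).
    apply: lsum_ext => t _; rewrite /ind; case: excluded_middle_informative => _; ring.
  rewrite /tg; ring.
have Htg : tg = 0.
  have := lsum_ext (transversal (N n)) _ _ (fun z _ => Hv z).
  rewrite lsum_scal sum_ind // Rmult_1_r /qconv lsum_swap.
  rewrite (lsum_ext _ _ (fun r => 0)).
    by rewrite lsum_zero.
  move=> r _; rewrite lsum_scal.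
  have := @F_shift G (N n) H1 H3 f Hf (ginv r); rewrite /= => ->; ring.
have Hk := @kernel G (N n) H1 H2 H3 f Hf (fun w => h w + -1 * u w) ltac:(move=> a b Hab; by rewrite (Hh _ _ Hab) (Hu _ _ Hab))
  ltac:(move=> z; by rewrite Hv Htg Rmult_0_l) x y.
have := Hou x y; lra.
Qed.
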